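(* Place the almost positive roots of type $C_n$ in the off-diagonal entries of an $(n+1)\times(n+1)$ array via the bijection: entry $(1,j)$ ($2\le j\le n+1$) is $-\alpha_{j-1}$; entry $(i,j)$ with $2\le i<j$ is $\varepsilon_{i-1}-\varepsilon_{j-1}$; entry $(i,j)$ with $i>j$ is $\varepsilon_j+\varepsilon_{i-1}$. Two almost positive roots $\alpha,\beta$ are $\underline c$-compatible if and only if their locations satisfy one of: (i) they lie in the same row or the same column; (ii) for some $k<m$, $i<j$ with $k,m,i,j$ pairwise distinct, they lie in entries $(k,i)$ and $(m,j)$, and either $k<i<m$ or $i<k<m<j$; (iii) for some $k<m$, $i<j$ with $k,m,i,j$ pairwise distinct, they lie in entries $(m,i)$ and $(k,j)$, and either ($k<i$ and $m<i$) or $i<k<j<m$ or $k>j$.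
   Context: Type $C_n$: standard basis $\varepsilon_i$ of $\mathbb{R}^n$, simple roots $\alpha_i=\varepsilon_i-\varepsilon_{i+1}$ ($i<n$), $\alpha_n=2\varepsilon_n$, $\Pi$ the simple roots, $\Phi_+=\{\varepsilon_i\pm\varepsilon_j:i<j\}\cup\{2\varepsilon_i\}$, $\Phi_{\ge-1}=\Phi_+\sqcup(-\Pi)$. With simple reflections $s_i$ and $c=s_1\cdots s_n$, $\tau:\Phi_{\ge-1}\to\Phi_{\ge-1}$ is $\tau(-\alpha_i)=s_1\cdots s_{i-1}(\alpha_i)$, $\tau(s_n\cdots s_{i+1}(\alpha_i))=-\alpha_i$, $\tau(\alpha)=c(\alpha)$ otherwise. The $\underline c$-compatibility degree $(-\|_{\underline c}-)$ is the unique $\tau$-invariant function $\Phi_{\ge-1}^2\to\mathbb{Z}$ with $(-\alpha\|_{\underline c}-\alpha')=0$ for $\alpha,\alpha'\in\Pi$ and $(-\alpha\|_{\underline c}\beta)=[\beta:\alpha]$ (coefficient of $\alpha$ in $\beta$) for $\alpha\in\Pi,\beta\in\Phi_+$; $\gamma,\gamma'$ are $\underline c$-compatible if $(\gamma\|_{\underline c}\gamma')=0$. *)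

(* Defs.v *)
(* Type C_n root system realised in Z^n, indices 0-based:
   math index i (1..n) corresponds to nat i-1 here. *)
From HB Require Import structures.
From mathcomp Require Import all_boot all_order all_algebra.
Import GRing.Theory Num.Theory.
Local Open Scope ring_scope.

Definition vec (n : nat) := {ffun 'I_n -> int}.

Definition eps (n i : nat) : vec n := [ffun k : 'I_n => ((((k : nat) == i) : nat)%:R : int)].

Definition alpha (n i : nat) : vec n :=
  if (i.+1 < n)%N then eps n i - eps n i.+1 else eps n i *+ 2.

Definition dot (n : nat) (u v : vec n) : int := \sum_(k < n) u k * v k.

Definition refl (n : nat) (a v : vec n) : vec n :=
  v - a *~ ((2 * dot n v a) %/ dot n a a)%Z.

Definition srefl (n i : nat) (v : vec n) : vec n := refl n (alpha n i) v.

Definition prodS (n : nat) (l : seq nat) (v : vec n) : vec n :=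
  foldr (fun i w => srefl n i w) v l.

Definition cox (n : nat) (v : vec n) : vec n := prodS n (iota 0 n) v.

Definition posroot (n : nat) (v : vec n) : bool :=
  [exists i : 'I_n, exists j : 'I_n,
     (i < j)%N && ((v == eps n i - eps n j) || (v == eps n i + eps n j))]
  || [exists i : 'I_n, v == eps n i *+ 2].

Definition negsimple (n : nat) (v : vec n) : bool :=
  [exists i : 'I_n, v == - alpha n i].

Definition almpos (n : nat) (v : vec n) : bool := posroot n v || negsimple n v.

Definition tau_neg_image (n i : nat) : vec n := prodS n (iota 0 i) (alpha n i).
Definition tau_neg_preimage (n i : nat) : vec n :=
  prodS n (rev (iota i.+1 (n - i.+1))) (alpha n i).

Definition tau (n : nat) (v : vec n) : vec n :=
  match [pick i : 'I_n | v == - alpha n i] with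
  | Some i => tau_neg_image n i
  | None =>
    match [pick i : 'I_n | v == tau_neg_preimage n i] with
    | Some i => - alpha n i
    | None => cox n v
    end
  end.

(* f is "the" c-compatibility degree: the tau-invariant function on
   Phi_{>=-1}^2 with the prescribed values on pairs with a negative simple
   first argument. *)
Definition is_compat_degree (n : nat) (f : vec n -> vec n -> int) : Prop :=
  [/\ (forall a b, almpos n a -> almpos n b -> f (tau n a) (tau n b) = f a b),
      (forall i j : 'I_n, f (- alpha n i) (- alpha n j) = 0) &
      (forall (i : 'I_n) (b : vec n) (c : 'I_n -> int),
          posroot n b -> b = \sum_(k < n) alpha n k *~ c k ->
          f (- alpha n i) b = c i)].

(* root placed in entry (r, c) (1-based, r <> c, 1 <= r, c <= n+1) of the array *)
Definition entry (n r c : nat) : vec n :=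
  if r == 1%N then - alpha n (c - 2)
  else if (r < c)%N then eps n (r - 2) - eps n (c - 2)
  else eps n (c - 1) + eps n (r - 2).

Definition valid_pos (n r c : nat) : Prop :=
  [/\ (1 <= r <= n.+1)%N, (1 <= c <= n.+1)%N & r <> c].

Definition distinct4 (a b c d : nat) : Prop :=
  a <> b /\ a <> c /\ a <> d /\ b <> c /\ b <> d /\ c <> d.

Definition pos_pair (r1 c1 r2 c2 x1 y1 x2 y2 : nat) : Prop :=
  (r1 = x1 /\ c1 = y1 /\ r2 = x2 /\ c2 = y2) \/
  (r1 = x2 /\ c1 = y2 /\ r2 = x1 /\ c2 = y1).

Definition cond_i (r1 c1 r2 c2 : nat) : Prop := r1 = r2 \/ c1 = c2.

Definition cond_ii (r1 c1 r2 c2 : nat) : Prop :=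
  exists k m i j : nat, [/\ (k < m)%N, (i < j)%N, distinct4 k m i j,
    pos_pair r1 c1 r2 c2 k i m j &
    ((k < i < m)%N \/ (i < k < m)%N /\ (m < j)%N)].

Definition cond_iii (r1 c1 r2 c2 : nat) : Prop :=
  exists k m i j : nat, [/\ (k < m)%N, (i < j)%N, distinct4 k m i j,
    pos_pair r1 c1 r2 c2 m i k j &
    [\/ (k < i)%N /\ (m < i)%N, (i < k < j)%N /\ (j < m)%N | (j < k)%N]].

(* Main.v *)
Require Import Defs.
From mathcomp Require Import all_boot all_order all_algebra.
From mathcomp Require Import zify.
Import GRing.Theory Num.Theory.
Local Open Scope ring_scope.

Definition mk (n : nat) (g : nat -> int) : vec n := [ffun k : 'I_n => g (k : nat)].
Definition d (k i : nat) : int := if k == i then 1 else 0.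

Lemma mkE n g (k : 'I_n) : mk n g k = g k.
Proof. by rewrite ffunE. Qed.

Lemma mk_ext n g1 g2 : (forall k, (k < n)%N -> g1 k = g2 k) -> mk n g1 = mk n g2.
Proof. move=> H; apply/ffunP => k; rewrite !mkE; exact: H. Qed.

Lemma mk_inj n g1 g2 k : mk n g1 = mk n g2 -> (k < n)%N -> g1 k = g2 k.
Proof. move=> H hk; have := congr1 (fun v : vec n => v (Ordinal hk)) H; by rewrite !mkE. Qed.

Lemma epsE n i : eps n i = mk n (d^~ i).
Proof. apply/ffunP => k; rewrite !ffunE /d; by case: eqP. Qed.

Lemma mkD n g1 g2 : mk n g1 + mk n g2 = mk n (fun k => g1 k + g2 k).
Proof. by apply/ffunP => k; rewrite !ffunE. Qed.
Lemma mkN n g : - mk n g = mk n (fun k => - g k).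
Proof. by apply/ffunP => k; rewrite !ffunE. Qed.
Lemma mkMn n g m : mk n g *+ m = mk n (fun k => g k *+ m).
Proof. by apply/ffunP => k; rewrite ffunMnE !ffunE. Qed.
Lemma mkMz n g m : mk n g *~ m = mk n (fun k => g k * m).
Proof. by apply/ffunP => k; rewrite ffunMzE !ffunE mulrzz. Qed.

Definition Af n i k : int := if (i.+1 < n)%N then d k i - d k i.+1 else d k i *+ 2.
Lemma alphaE n i : alpha n i = mk n (Af n i).
Proof. rewrite /alpha /Af; case: ifP => _; rewrite !epsE ?mkN ?mkD ?mkMn //. Qed.

Lemma sum_delta n (g : nat -> int) i : (i < n)%N -> \sum_(k < n) g k * d k i = g i.
Proof.
move=> hi; rewrite (bigD1 (Ordinal hi)) //= big1 ?addr0 /d ?eqxx ?mulr1 //.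
move=> k hk; case: eqP => [e|]; last by rewrite mulr0.
by exfalso; move/eqP: hk; apply; apply/val_inj.
Qed.
Arguments sum_delta {n} g {i}.

Ltac splitif_B := repeat match goal with
  | |- context [if (?a == ?b)%N then _ else _] => case: (@eqP _ a b) => [?|?]; try subst
  | |- context [if ?b then _ else _] => case: ifP => ? end.
Ltac solve_if_B := rewrite /d /Af; splitif_B; lia.

Lemma dot_mk n g h : dot n (mk n g) (mk n h) = \sum_(k < n) g k * h k.
Proof. by apply: eq_bigr => k _; rewrite !mkE. Qed.

Lemma sum_delta2 {n} (g : nat -> int) {i j} : (i < n)%N -> (j < n)%N ->
  \sum_(k < n) g k * (d k i - d k j) = g i - g j.
Proof.
move=> hi hj; rewrite -(sum_delta g hi) -(sum_delta g hj) -sumrB.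
by apply: eq_bigr => k _; rewrite mulrBr.
Qed.

Definition sw (i : nat) (g : nat -> int) k := if k == i then g i.+1 else if k == i.+1 then g i else g k.
Definition negat (i : nat) (g : nat -> int) k := if k == i then - g k else g k.

Lemma srefl_sw n i g : (i.+1 < n)%N -> srefl n i (mk n g) = mk n (sw i g).
Proof.
move=> hi; rewrite /srefl /refl alphaE !dot_mk.
have -> : \sum_(k < n) g k * Af n i k = g i - g i.+1.
  rewrite -(sum_delta2 g (ltnW hi) hi); apply: eq_bigr => k _; by rewrite /Af hi.
have -> : \sum_(k < n) Af n i k * Af n i k = 2.
  rewrite (eq_bigr (fun k : 'I_n => Af n i k * (d k i - d k i.+1))); last first.
    by move=> k _; rewrite {2}/Af hi.
  rewrite (sum_delta2 (Af n i) (ltnW hi) hi) /Af hi; solve_if_B.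
rewrite mulKz // mkMz mkN mkD; apply: mk_ext => k _; rewrite /sw /Af hi; solve_if_B.
Qed.

Lemma srefl_ng n i g : i.+1 = n -> srefl n i (mk n g) = mk n (negat i g).
Proof.
move=> hi; have hlt : (i < n)%N by rewrite -hi.
have hAf : forall k, Af n i k = d k i *+ 2 by move=> k; rewrite /Af hi ltnn.
rewrite /srefl /refl alphaE !dot_mk.
have -> : \sum_(k < n) g k * Af n i k = (g i) * 2.
  rewrite -(sum_delta (fun k => g k * 2) hlt); apply: eq_bigr => k _; rewrite hAf; solve_if_B.
have -> : \sum_(k < n) Af n i k * Af n i k = 4.
  rewrite (eq_bigr (fun k : 'I_n => (Af n i k * 2) * d k i)); last first.
    by move=> k _; rewrite !hAf; solve_if_B.
  by rewrite (sum_delta (fun k => Af n i k * 2) hlt) hAf /d eqxx.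
have -> : (2 * (g i * 2) %/ 4)%Z = g i.
  by rewrite mulrC -mulrA (_ : 2 * 2 = 4) // mulzK.
rewrite mkMz mkN mkD; apply: mk_ext => k _; rewrite /negat hAf; solve_if_B.
Qed.

Ltac splitif_C := repeat match goal with
  | |- context [if (?a == ?b)%N then _ else _] => case: (@eqP _ a b) => [?|?]; try subst
  | |- context [if ?b then _ else _] => case: ifP => ? end.
Ltac fin_C := rewrite ?addnS ?addSn ?subn1 ?subSS ?subn0 ?addn0 /=; try lia.
Ltac solve_if_C := rewrite /d /Af; splitif_C; fin_C.

Definition rotf (j dd : nat) (g : nat -> int) k :=
  if (k < j)%N then g k else if k == j then g (j + dd)%N else if (k <= j + dd)%N then g k.-1 else g k.

Lemma prodS_iota n j dd g : (j + dd < n)%N -> prodS n (iota j dd) (mk n g) = mk n (rotf j dd g).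
Proof.
elim: dd j => [|dd IH] j hj.
  by apply: mk_ext => k _; rewrite /rotf; solve_if_C.
rewrite /= -/(prodS n (iota j.+1 dd) (mk n g)) IH; last by lia.
rewrite srefl_sw; last by lia.
apply: mk_ext => k _; rewrite /rotf /sw; solve_if_C.
Qed.

Definition rotrf (j dd : nat) (g : nat -> int) k :=
  if (k < j)%N then g k else if (k < j + dd)%N then g k.+1 else if k == (j + dd)%N then g j else g k.

Lemma prodS_rev_iota n j dd g : (j + dd < n)%N ->
  prodS n (rev (iota j dd)) (mk n g) = mk n (rotrf j dd g).
Proof.
elim: dd j g => [|dd IH] j g hj.
  by apply: mk_ext => k _; rewrite /rotrf; solve_if_C.
rewrite /= rev_cons /prodS foldr_rcons -/(prodS n _ _) srefl_sw; last by lia.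
rewrite IH; last by lia.
apply: mk_ext => k _; rewrite /rotrf /sw; solve_if_C.
Qed.

Lemma cox_mk n g : (0 < n)%N ->
  cox n (mk n g) = mk n (fun k => if k == 0%N then - g n.-1 else g k.-1).
Proof.
move=> hn; have e : iota 0 n = iota 0 n.-1 ++ [:: n.-1].
  by rewrite -{1}(prednK hn) -addn1 iotaD.
rewrite /cox e /prodS foldr_cat -/(prodS _ _ _) /= srefl_ng; last by lia.
rewrite -/(prodS _ _ _) prodS_iota; last by lia.
apply: mk_ext => k hk; rewrite /rotf /negat add0n; solve_if_C.
Qed.

Arguments mk_inj {n g1 g2} k.
Ltac split1_D := match goal with
  | |- context [if (?a == ?b)%N then _ else _] => case: (@eqP _ a b) => [?|?]; try subst
  | |- context [if ?b then _ else _] => case: ifP => ? end.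
Ltac go_D := first [ lia | split1_D; go_D ].

Definition E n r c k : int :=
  if r == 1%N then - Af n (c-2) k
  else if (r < c)%N then d k (r-2) - d k (c-2) else d k (c-1) + d k (r-2).

Lemma entryE n r c : entry n r c = mk n (E n r c).
Proof.
rewrite /entry /E; case: ifP => _; first by rewrite alphaE mkN.
by case: ifP => _; rewrite !epsE ?mkN mkD.
Qed.


Lemma alpha_inj n i j : (i < n)%N -> (j < n)%N -> alpha n i = alpha n j -> i = j.
Proof.
move=> hi hj; rewrite !alphaE => H; move: (mk_inj i H hi); rewrite /Af /d; go_D.
Qed.

Lemma entry_not_negsimple n r c i : valid_pos n r c -> r <> 1%N -> (i < n)%N ->
  entry n r c <> - alpha n i.
Proof.
case=> /andP[h1 h2] /andP[h3 h4] h5 hr1 hi; rewrite entryE alphaE mkN => H.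
move: (mk_inj i H hi) (mk_inj (r-2)%N H).
rewrite /E (introF eqP hr1) /Af /d.
case: ifP => hrc; go_D.
Qed.

Lemma entry_preimage n r c i : valid_pos n r c -> (i < n)%N ->
  entry n r c = mk n (fun k => d k i + d k n.-1) -> r = n.+1 /\ c = i.+1.
Proof.
case=> /andP[h1 h2] /andP[h3 h4] h5 hi; rewrite entryE => H.
move: (mk_inj n.-1 H) (mk_inj i H hi) (mk_inj (c-2)%N H).
rewrite /E /Af /d.
case: ifP => hr1; [|case: ifP => hrc]; go_D.
Qed.

Arguments mk_inj {n g1 g2} k.
Ltac split1_F := match goal with
  | |- context [if ?c then _ else _] =>
    lazymatch c with
    | context [if _ then _ else _] => fail
    | (?a == ?b)%N => case: (@eqP _ a b) => [?|?]; try subst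
    | _ => case: ifP => ?
    end
  end.
Ltac go_F := first [ lia | split1_F; go_F ].
Ltac fin_F := rewrite ?addnS ?addSn ?subn1 ?subSS ?subn0 ?addn0 ?add0n /=; try lia.
Ltac fin2_F := rewrite ?addnS ?addSn ?subn1 ?subSS ?subn0 ?addn0 ?add0n /=; lia.
Ltac go2_F := first [ fin2_F | split1_F; go2_F ].

Lemma tni_E n i : (i < n)%N -> tau_neg_image n i =
  mk n (fun k => if (i.+1 < n)%N then d k 0 - d k i.+1 else d k 0 *+ 2).
Proof.
move=> hi; rewrite /tau_neg_image alphaE prodS_iota ?add0n //.
apply: mk_ext => k hk; rewrite /rotf /Af /d; go2_F.
Qed.

Lemma tnp_E n i : (i < n)%N -> tau_neg_preimage n i = mk n (fun k => d k i + d k n.-1).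
Proof.
move=> hi; rewrite /tau_neg_preimage.
case: (ltnP i.+1 n) => h.
  have e : iota i.+1 (n - i.+1) = iota i.+1 (n - i.+2) ++ [:: (i.+1 + (n - i.+2))%N].
    by rewrite (_ : (n - i.+1 = (n - i.+2) + 1)%N) ?iotaD //; lia.
  rewrite e rev_cat /= alphaE -/(prodS _ _ _) prodS_rev_iota; last by lia.
  rewrite srefl_ng; last by lia.
  apply: mk_ext => k hk; rewrite /rotrf /negat /Af /d; go2_F.
have -> : (n - i.+1 = 0)%N by lia.
rewrite /= alphaE; apply: mk_ext => k hk; rewrite /Af /d; go2_F.
Qed.

Arguments entry_not_negsimple {n r c i}.
Arguments entry_preimage {n r c i}.
Arguments alpha_inj {n i j}.
Definition Tn n x := if x == n.+1 then 1%N else x.+1.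

Lemma tau_entry n r c : (0 < n)%N -> valid_pos n r c ->
  tau n (entry n r c) = entry n (Tn n r) (Tn n c).
Proof.
move=> hn hv; have [/andP[h1 h2] /andP[h3 h4] h5] := hv.
rewrite /tau; case: pickP => [i /eqP Hi | H1].
  case: (eqVneq r 1%N) => [er|/eqP hr]; last first.
    by exfalso; exact: (entry_not_negsimple hv hr (ltn_ord i) Hi).
  subst r; have hc : (c - 2 < n)%N by lia.
  move: Hi; rewrite {1}/entry eqxx => /oppr_inj /(alpha_inj hc (ltn_ord i)) ei.
  rewrite -ei tni_E // entryE; apply: mk_ext => k hk; rewrite /Tn /E /Af /d; go2_F.
have hr : r <> 1%N.
  move=> er; subst r; have hc : (c - 2 < n)%N by lia.
  by move: (H1 (Ordinal hc)); rewrite /= /entry !eqxx.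
case: pickP => [i /eqP Hi | H2].
  move: Hi; rewrite tnp_E // => /(entry_preimage hv (ltn_ord i)) [er ec].
  rewrite alphaE mkN entryE; apply: mk_ext => k hk; rewrite /Tn /E /Af /d er ec; go2_F.
have hr' : r <> n.+1.
  move=> er; subst r; have hc : (c - 1 < n)%N by lia.
  move: (H2 (Ordinal hc)); rewrite /= tnp_E // entryE.
  have -> : mk n (E n n.+1 c) = mk n (fun k => d k (c - 1) + d k n.-1).
    apply: mk_ext => k hk; rewrite /E /Af /d; go2_F.
  by rewrite eqxx.
rewrite entryE cox_mk // entryE; apply: mk_ext => k hk; rewrite /Tn /E /Af /d; go2_F.
Qed.

Definition condD (r1 c1 r2 c2 : nat) : Prop :=
  r1 = r2 \/ c1 = c2 \/
  ((r1 < r2)%N /\ (c1 < c2)%N /\ distinct4 r1 r2 c1 c2 /\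
     (((r1 < c1)%N /\ (c1 < r2)%N) \/ ((c1 < r1)%N /\ (r2 < c2)%N))) \/
  ((r2 < r1)%N /\ (c2 < c1)%N /\ distinct4 r2 r1 c2 c1 /\
     (((r2 < c2)%N /\ (c2 < r1)%N) \/ ((c2 < r2)%N /\ (r1 < c1)%N))) \/
  ((r2 < r1)%N /\ (c1 < c2)%N /\ distinct4 r2 r1 c1 c2 /\
     (((r2 < c1)%N /\ (r1 < c1)%N) \/ ((c1 < r2)%N /\ (r2 < c2)%N /\ (c2 < r1)%N) \/ (c2 < r2)%N)) \/
  ((r1 < r2)%N /\ (c2 < c1)%N /\ distinct4 r1 r2 c2 c1 /\
     (((r1 < c2)%N /\ (r2 < c2)%N) \/ ((c2 < r1)%N /\ (r1 < c1)%N /\ (c1 < r2)%N) \/ (c1 < r1)%N)).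

Lemma cond_equiv r1 c1 r2 c2 :
  cond_i r1 c1 r2 c2 \/ cond_ii r1 c1 r2 c2 \/ cond_iii r1 c1 r2 c2 <-> condD r1 c1 r2 c2.
Proof.
rewrite /cond_i /cond_ii /cond_iii /condD /pos_pair; split.
  case=> [H|[H|H]].
  - lia.
  - case: H => k [m [i [j [h1 h2 h3 h4 h5]]]].
    move: h3; rewrite /distinct4; case: h4 => [[? [? [? ?]]]|[? [? [? ?]]]]; subst.
    + by move=> ?; do 2 right; left; lia.
    + by move=> ?; do 3 right; left; lia.
  - case: H => k [m [i [j [h1 h2 h3 h4 h5]]]].
    move: h3; rewrite /distinct4; case: h4 => [[? [? [? ?]]]|[? [? [? ?]]]]; subst.
    + by move=> ?; do 4 right; left; case: h5 => ?; lia.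
    + by move=> ?; do 5 right; case: h5 => ?; lia.
case=> [H|[H|[H|[H|[H|H]]]]].
- by left; left.
- by left; right.
- right; left; exists r1, r2, c1, c2; case: H => [h1 [h2 [h3 h4]]]; split => //; [left; lia | lia].
- right; left; exists r2, r1, c2, c1; case: H => [h1 [h2 [h3 h4]]]; split => //; [right; lia | lia].
- right; right; exists r2, r1, c1, c2; case: H => [h1 [h2 [h3 h4]]]; split => //; first (left; lia).
  case: h4 => [?|[?|?]]; [constructor 1 | constructor 2 | constructor 3]; lia.
- right; right; exists r1, r2, c2, c1; case: H => [h1 [h2 [h3 h4]]]; split => //; first (right; lia).
  case: h4 => [?|[?|?]]; [constructor 1 | constructor 2 | constructor 3]; lia.
Qed.



Definition cycb (a b c : nat) : bool := [|| (a < b < c)%N, (b < c < a)%N | (c < a < b)%N].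
Definition dist4b (a b c e : nat) : bool :=
  [&& a != b, a != c, a != e, b != c, b != e & c != e].
Definition cycform (r1 c1 r2 c2 : nat) : bool :=
  [|| r1 == r2, c1 == c2 |
   dist4b r1 c1 r2 c2 &&
   [|| cycb r1 c1 r2 && cycb r1 r2 c2, cycb r1 c1 c2 && cycb r1 c2 r2 |
       cycb r1 r2 c2 && cycb r1 c2 c1]].

Lemma cycb_T n a b c : (1 <= a <= n.+1)%N -> (1 <= b <= n.+1)%N -> (1 <= c <= n.+1)%N ->
  cycb (Tn n a) (Tn n b) (Tn n c) = cycb a b c.
Proof.
move=> ha hb hc; rewrite /Tn /cycb.
case: (a =P n.+1) => ?; case: (b =P n.+1) => ?; case: (c =P n.+1) => ?; apply/idP/idP; lia.
Qed.

Lemma Tn_eq n a b : (1 <= a <= n.+1)%N -> (1 <= b <= n.+1)%N -> (Tn n a == Tn n b) = (a == b).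
Proof.
move=> ha hb; rewrite /Tn; case: (a =P n.+1) => ?; case: (b =P n.+1) => ?; apply/eqP/eqP; lia.
Qed.

Lemma cycform_T n r1 c1 r2 c2 : valid_pos n r1 c1 -> valid_pos n r2 c2 ->
  cycform (Tn n r1) (Tn n c1) (Tn n r2) (Tn n c2) = cycform r1 c1 r2 c2.
Proof.
case=> ha hb _ [] hc he _.
by rewrite /cycform /dist4b !cycb_T // !Tn_eq.
Qed.

Ltac pickP3_H := first [ apply/or3P; constructor 1; lia | apply/or3P; constructor 2; lia
                     | apply/or3P; constructor 3; lia ].
Ltac pickD_H := first [ do 2 right; left; lia | do 3 right; left; lia | do 4 right; left; lia
                    | do 5 right; lia ].

Ltac clear_neqs_H := repeat match goal with h : _ <> _ |- _ => clear h end.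
Ltac minneq_H tac := first
  [ clear_neqs_H; tac
  | match goal with h : _ <> _ |- _ => move: h; clear_neqs_H; move=> h; tac end
  | match goal with h1 : _ <> _, h2 : _ <> _ |- _ => move: h1 h2; clear_neqs_H; move=> h1 h2; tac end ].

Lemma condD_cyc r1 c1 r2 c2 : condD r1 c1 r2 c2 <-> cycform r1 c1 r2 c2.
Proof.
rewrite /condD /cycform; split.
{ case=> [->|[->|H]]; first by rewrite eqxx.
    by rewrite eqxx orbT.
  have hd : dist4b r1 c1 r2 c2 by rewrite /dist4b; move: H; rewrite /distinct4; lia.
  apply/orP; right; apply/orP; right; rewrite hd /=.
  clear hd; move: H; rewrite /distinct4 /cycb => H; case: H => [H|[H|[H|H]]].
  all: case: H => [h1 [h2 [[d1 [d2 [d3 [d4 [d5 d6]]]]] h4]]].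
  all: first [case: h4 => [h4|[h4|h4]] | case: h4 => [h4|h4]]; minneq_H ltac:(first [pickP3_H | lia]). }
{ move/orP => [/eqP H|/orP [/eqP H| /andP [hd hP]]]; [by left | by right; left |].
  clear hd; rewrite /distinct4.
  case/or3P: hP => /andP [h1 h2]; move: h1 h2; rewrite /cycb;
    case/or3P => h1; case/or3P => h2; first [pickD_H | lia]. }
Qed.

Arguments mk_inj {n g1 g2} k.
Ltac split1_I := match goal with
  | |- context [if ?c then _ else _] =>
    lazymatch c with
    | context [if _ then _ else _] => fail
    | (?a == ?b)%N => case: (@eqP _ a b) => [?|?]; try subst
    | _ => case: ifP => ?
    end
  end.
Ltac fin2_I := rewrite ?addnS ?addSn ?subn1 ?subSS ?subn0 ?addn0 ?add0n /=; lia.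
Ltac go2_I := first [ fin2_I | split1_I; go2_I ].

Lemma sum_alpha n (cf : nat -> int) :
  \sum_(k < n) alpha n k *~ cf k =
  mk n (fun j => (if (j.+1 < n)%N then cf j else cf j *+ 2) - (if (0 < j)%N then cf j.-1 else 0)).
Proof.
apply/ffunP => j; rewrite sum_ffunE mkE.
have hj := ltn_ord j.
have e : forall k : 'I_n, (alpha n k *~ cf k) j =
   (cf k * (if (j.+1 < n)%N then 1 else 2)) * d k j - (if (0 < j)%N then cf k * d k j.-1 else 0).
  move=> k; rewrite ffunMzE alphaE mkE mulrzz /Af /d; go2_I.
rewrite (eq_bigr _ (fun k _ => e k)) sumrB.
rewrite (sum_delta (fun k => cf k * (if (j.+1 < n)%N then 1 else 2)) hj).
case: (ltnP 0 j) => hj0.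
  rewrite (sum_delta cf (i := j.-1)); last by lia.
  go2_I.
rewrite big1 //.
go2_I.
Qed.

Definition cfE n r c k : int :=
  if (r < c)%N then (if ((r - 2 <= k)%N && (k < c - 2)%N) then 1 else 0)
  else (if ((c - 1 <= k)%N && (k < n.-1)%N) then 1 else 0) +
       (if ((r - 2 <= k)%N && (k < n.-1)%N) then 1 else 0) + (if k == n.-1 then 1 else 0).

Lemma entry_sum n r c : valid_pos n r c -> r <> 1%N ->
  entry n r c = \sum_(k < n) alpha n k *~ cfE n r c k.
Proof.
case=> /andP[h1 h2] /andP[h3 h4] h5 hr.
rewrite sum_alpha entryE; apply: mk_ext => k hk.
rewrite /E /cfE /d (introF eqP hr); case: ifP => hrc; go2_I.
Qed.

Lemma entry_pos n r c : valid_pos n r c -> r <> 1%N -> posroot n (entry n r c).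
Proof.
case=> /andP[h1 h2] /andP[h3 h4] h5 hr.
rewrite /posroot /entry (introF eqP hr).
case: ifP => hrc.
  have hi : (r - 2 < n)%N by lia.
  have hj : (c - 2 < n)%N by lia.
  apply/orP; left; apply/existsP; exists (Ordinal hi); apply/existsP; exists (Ordinal hj).
  by rewrite /= eqxx andbT; lia.
have hi : (c - 1 < n)%N by lia.
have hj : (r - 2 < n)%N by lia.
case: (ltnP (c - 1) (r - 2)) => hij.
  apply/orP; left; apply/existsP; exists (Ordinal hi); apply/existsP; exists (Ordinal hj).
  by rewrite /= eqxx orbT hij.
apply/orP; right; apply/existsP; exists (Ordinal hi) => /=.
by rewrite (_ : (r - 2 = c - 1)%N) ?mulr2n //; lia.
Qed.

Lemma entry_almpos n r c : valid_pos n r c -> almpos n (entry n r c).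
Proof.
move=> hv; rewrite /almpos; case: (eqVneq r 1%N) => [er|/eqP hr].
  case: hv => /andP[h1 h2] /andP[h3 h4] h5; subst r.
  have hi : (c - 2 < n)%N by lia.
  apply/orP; right; apply/existsP; exists (Ordinal hi); by rewrite /entry eqxx.
by rewrite entry_pos.
Qed.

Lemma cycb1 x y : (1 < x)%N -> (1 < y)%N -> cycb 1 x y = (x < y)%N.
Proof. move=> hx hy; rewrite /cycb; apply/idP/idP; lia. Qed.

Lemma base n f (hf : is_compat_degree n f) c1 r2 c2 :
  valid_pos n 1 c1 -> valid_pos n r2 c2 ->
  (f (entry n 1 c1) (entry n r2 c2) = 0 <-> cycform 1 c1 r2 c2).
Proof.
case: hf => _ h2 h3 hv1 hv2.
have [/andP[h1 h1'] /andP[h3' h4] h5] := hv1.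
have [/andP[g1 g2] /andP[g3 g4] g5] := hv2.
have hi : (c1 - 2 < n)%N by lia.
have e1 : entry n 1 c1 = - alpha n (Ordinal hi) by rewrite /entry eqxx.
case: (eqVneq r2 1%N) => [er|/eqP hr].
  subst r2; have hj : (c2 - 2 < n)%N by lia.
  have e2 : entry n 1 c2 = - alpha n (Ordinal hj) by rewrite /entry eqxx.
  by rewrite e1 e2 h2 /cycform eqxx.
rewrite e1 (h3 (Ordinal hi) _ (fun k => cfE n r2 c2 k) (entry_pos _ _ _ hv2 hr) (entry_sum _ _ _ hv2 hr)) /=.
have c1g : (1 < c1)%N by lia.
have r2g : (1 < r2)%N by lia.
have e3 : (1 == r2) = false by apply/eqP; lia.
have e4 : (1 == c1) = false by apply/eqP; lia.
have e5 : (c1 == 1%N) = false by apply/eqP; lia.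
have [hrc|hrc] : (r2 < c2)%N \/ (c2 < r2)%N by lia.
all: clear g5 h5 hr hv1 hv2 h2 h3 e1.
all: case: (ltngtP 1 c2) => hc2; [|lia|].
all: rewrite /cycform e3 /=.
2,4: by subst c2; rewrite /dist4b eqxx /= andbF; split => // ; rewrite /cfE; go2_I.
all: have e6 : (1 == c2) = false by apply/eqP; lia.
all: rewrite /dist4b e4 e6 e3 /= !cycb1 //.
all: case: (ltngtP c1 r2) => hcr; case: (ltngtP c1 c2) => hcc; rewrite /cfE; go2_I.
Qed.

Arguments tau_entry {n r c}.
Arguments cycform_T {n r1 c1 r2 c2}.
Arguments base {n f} hf {c1 r2 c2}.
Arguments entry_almpos {n r c}.
Lemma valid_T n r c : valid_pos n r c -> valid_pos n (Tn n r) (Tn n c).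
Proof.
case=> /andP[h1 h2] /andP[h3 h4] h5; rewrite /Tn /valid_pos.
case: (r =P n.+1) => ?; case: (c =P n.+1) => ?; split; lia.
Qed.

Arguments valid_T {n r c}.
Lemma step n f (hf : is_compat_degree n f) r1 c1 r2 c2 : (0 < n)%N ->
  valid_pos n r1 c1 -> valid_pos n r2 c2 ->
  f (entry n r1 c1) (entry n r2 c2) = f (entry n (Tn n r1) (Tn n c1)) (entry n (Tn n r2) (Tn n c2)).
Proof.
case: hf => h1 _ _ hn hv1 hv2.
by rewrite -(tau_entry hn hv1) -(tau_entry hn hv2) h1 // entry_almpos.
Qed.

Arguments step {n f} hf {r1 c1 r2 c2}.
Lemma all_rows n f (hf : is_compat_degree n f) (hn : (0 < n)%N) k : forall r1 c1 r2 c2,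
  valid_pos n r1 c1 -> valid_pos n r2 c2 -> (n.+1 - r1 = k)%N ->
  (f (entry n r1 c1) (entry n r2 c2) = 0 <-> cycform r1 c1 r2 c2).
Proof.
elim: k => [|k IH] r1 c1 r2 c2 hv1 hv2 hk.
  have er : r1 = n.+1 by case: hv1 => /andP[? ?] _ _; lia.
  have hT : Tn n r1 = 1%N by rewrite /Tn er eqxx.
  have hv1' := valid_T hv1; rewrite hT in hv1'.
  rewrite (step hf hn hv1 hv2) -(cycform_T hv1 hv2) hT.
  by apply: base => //; exact: valid_T.
case: (eqVneq r1 1%N) => [er|hr].
  by subst r1; apply: base.
rewrite (step hf hn hv1 hv2) -(cycform_T hv1 hv2).
apply: IH; try exact: valid_T.
rewrite /Tn; case: (r1 =P n.+1) => ?; lia.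
Qed.

Theorem theorem4p6 (n : nat) (hn : (1 <= n)%N) (f : vec n -> vec n -> int)
  (hf : is_compat_degree n f) (r1 c1 r2 c2 : nat) :
  valid_pos n r1 c1 -> valid_pos n r2 c2 ->
  (f (entry n r1 c1) (entry n r2 c2) = 0 <->
   cond_i r1 c1 r2 c2 \/ cond_ii r1 c1 r2 c2 \/ cond_iii r1 c1 r2 c2).
Proof.
move=> hv1 hv2; rewrite cond_equiv condD_cyc.
exact: (@all_rows n f hf hn _ r1 c1 r2 c2 hv1 hv2 erefl).
Qed.
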